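(* Let $\lambda=\Theta\Rightarrow\Omega$ and $\lambda^*$ be as in the context. For every model $\mathcal{M}=\langle W,V\rangle$, $w\in W$ and $X\subseteq W$: $\mathcal{M},w,X\vDash\lambda$ if and only if $\mathcal{M},w,X\vDash\lambda^*$, where $\vDash$ is the Kolodny–MacFarlane semantics.
   Context: Formulas: $\varphi::= p\mid \neg\varphi\mid (\varphi\wedge\varphi)\mid \Box\varphi \mid (\varphi\Rightarrow\varphi)$; $\vee,\to,\bot$ as usual, $\Diamond\varphi:=\neg\Box\neg\varphi$; nonmodal formulas contain neither $\Box$ nor $\Rightarrow$. Models $\mathcal{M}=\langle W,V\rangle$: $W$ nonempty, $V(p)\subseteq W$. Kolodny–MacFarlane semantics at $\mathcal{M},w,X$ ($w\in W$, $X\subseteq W$): $p$ true iff $w\in V(p)$; $\neg,\wedge$ Boolean; $\Box\varphi$ true iff $\varphi$ is true at $\mathcal{M},v,X$ for all $v\in X$; $\varphi\Rightarrow\psi$ true iff $\mathcal{M},w,X'\vDash\Box\psi$ for every $X'$ with (i) $X'\subseteq X$, (ii) $X'\subseteq\llbracket\varphi\rrbracket^{\mathcal{M},X'}$, (iii) no $X''$ satisfying (i),(ii) has $X'\subsetneq X''$; here $\llbracket\varphi\rrbracket^{\mathcal{M},Y}=\{v\in Y\mid \mathcal{M},v,Y\vDash\varphi\}$. Let $\lambda=\Theta\Rightarrow\Omega$ with $\Theta=\bigvee_{i\in I}\theta_i$, $\Omega=\bigvee_{j\in J}\omega_j$ ($I,J$ finite), $\theta_i=\varphi_i\wedge\Box\psi_i\wedge\bigwedge_{n\in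 D_i}\Diamond\chi_n$, $\omega_j=\alpha_j\wedge\Box\beta_j\wedge\bigwedge_{m\in E_j}\Diamond\gamma_m$, all $\varphi_i,\psi_i,\chi_n,\alpha_j,\beta_j,\gamma_m$ nonmodal. For $K\subseteq I$: $\mathtt{info}_K:=(\bigvee_{k\in K}\varphi_k)\wedge\bigwedge_{k\in K}\psi_k$; $\mathtt{good}_K:=\bigwedge_{k\in K}\bigwedge_{n\in D_k}\Diamond(\mathtt{info}_K\wedge\chi_n)$; $\mathtt{max}_K:=\mathtt{good}_K\wedge\bigwedge_{L\subseteq I}\big((\Box(\mathtt{info}_K\to\mathtt{info}_L)\wedge\Diamond(\neg\mathtt{info}_K\wedge\mathtt{info}_L))\to\neg\mathtt{good}_L\big)$. For $S\subseteq J$: $\mathtt{state}_S:=\bigwedge_{s\in S}\alpha_s\wedge\bigwedge_{s\in J\setminus S}\neg\alpha_s$. Then $\lambda^*:=\bigwedge_{K\subseteq I}\Big(\mathtt{max}_K\to\Box\big(\mathtt{info}_K\to\bigwedge_{S\subseteq J}(\mathtt{state}_S\to\bigvee_{s\in S}(\Box(\mathtt{info}_K\to\beta_s)\wedge\bigwedge_{m\in E_s}\Diamond(\mathtt{info}_K\wedge\gamma_m)))\big)\Big)$, with empty disjunction $\bot$ and empty conjunction $\top$. *)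

(* Defs.v *)
From mathcomp Require Import all_boot.
Set Implicit Arguments. Unset Strict Implicit. Unset Printing Implicit Defensive.

(* Formulas: phi ::= p | ~phi | (phi /\ phi) | Box phi | (phi => phi) *)
Inductive form : Type :=
| Var  : nat -> form
| Neg  : form -> form
| And  : form -> form -> form
| Box  : form -> form
| Cond : form -> form -> form.

Definition Or  (a b : form) : form := Neg (And (Neg a) (Neg b)).
Definition Imp (a b : form) : form := Neg (And a (Neg b)).
Definition Bot : form := And (Var 0) (Neg (Var 0)).
Definition Top : form := Neg Bot.
Definition Dia (a : form) : form := Neg (Box (Neg a)).

Definition BigAnd (s : seq form) : form := foldr And Top s.
Definition BigOr  (s : seq form) : form := foldr Or Bot s.

Fixpoint nonmodal (f : form) : Prop :=
  match f with
  | Var _ => True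
  | Neg a => nonmodal a
  | And a b => nonmodal a /\ nonmodal b
  | Box _ => False
  | Cond _ _ => False
  end.

(* Kolodny–MacFarlane semantics on a model <W,V>, at world w and
   information state X (subsets of W represented as predicates). *)
Fixpoint sat (W : Type) (V : nat -> W -> Prop) (w : W) (X : W -> Prop)
  (f : form) {struct f} : Prop :=
  match f with
  | Var p => V p w
  | Neg a => ~ sat V w X a
  | And a b => sat V w X a /\ sat V w X b
  | Box a => forall v, X v -> sat V v X a
  | Cond a b =>
      forall X' : W -> Prop,
        (forall v, X' v -> X v) ->
        (forall v, X' v -> sat V v X' a) ->
        (~ exists X'' : W -> Prop,
              (forall v, X'' v -> X v) /\
              (forall v, X'' v -> sat V v X'' a) /\
              (forall v, X' v -> X'' v) /\
              (exists v, X'' v /\ ~ X' v)) ->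
        forall v, X' v -> sat V v X' b
  end.

Section Lambda.
Variables (I J : finType).
Variables (phi psi : I -> form) (D : I -> seq form).
Variables (alpha beta : J -> form) (E : J -> seq form).

Definition theta (i : I) : form :=
  And (And (phi i) (Box (psi i))) (BigAnd [seq Dia c | c <- D i]).
Definition omega (j : J) : form :=
  And (And (alpha j) (Box (beta j))) (BigAnd [seq Dia g | g <- E j]).

Definition Theta : form := BigOr [seq theta i | i <- enum I].
Definition Omega : form := BigOr [seq omega j | j <- enum J].
Definition lambda : form := Cond Theta Omega.

Definition info (K : {set I}) : form :=
  And (BigOr [seq phi k | k <- enum K]) (BigAnd [seq psi k | k <- enum K]).

Definition good (K : {set I}) : form :=
  BigAnd (flatten [seq [seq Dia (And (info K) c) | c <- D k] | k <- enum K]).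

Definition maxK (K : {set I}) : form :=
  And (good K)
      (BigAnd [seq Imp (And (Box (Imp (info K) (info L)))
                            (Dia (And (Neg (info K)) (info L))))
                       (Neg (good L)) | L <- enum {set I}]).

Definition state (Sj : {set J}) : form :=
  And (BigAnd [seq alpha s | s <- enum Sj])
      (BigAnd [seq Neg (alpha s) | s <- enum (~: Sj)]).

Definition lambda_star : form :=
  BigAnd [seq Imp (maxK K)
              (Box (Imp (info K)
                 (BigAnd [seq Imp (state Sj)
                    (BigOr [seq And (Box (Imp (info K) (beta s)))
                                    (BigAnd [seq Dia (And (info K) g) | g <- E s])
                           | s <- enum Sj])
                  | Sj <- enum {set J}])))
         | K <- enum {set I}].
End Lambda.

(* Main.v *)
Require Import Defs.
From Stdlib Require Import List Classical ClassicalEpsilon Setoid Morphisms.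
From mathcomp Require Import all_boot.
Set Implicit Arguments.

Section Gen.
Variables (W : Type) (V : nat -> W -> Prop).

Lemma sat_And v Y a b : sat V v Y (And a b) <-> sat V v Y a /\ sat V v Y b.
Proof. by []. Qed.

Lemma sat_Box v Y a : sat V v Y (Box a) <-> forall u, Y u -> sat V u Y a.
Proof. by []. Qed.

Lemma sat_Neg v Y a : sat V v Y (Neg a) <-> ~ sat V v Y a.
Proof. by []. Qed.

Lemma sat_Or v Y a b : sat V v Y (Or a b) <-> sat V v Y a \/ sat V v Y b.
Proof. simpl. split; [intro H; destruct (classic (sat V v Y a)); tauto | tauto]. Qed.

Lemma sat_Imp v Y a b : sat V v Y (Imp a b) <-> (sat V v Y a -> sat V v Y b).
Proof. simpl. split; [intros H Ha; apply NNPP; tauto | tauto]. Qed.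

Lemma sat_Dia v Y a : sat V v Y (Dia a) <-> exists u, Y u /\ sat V u Y a.
Proof. simpl. split.
- intro H. apply NNPP; intro H'; apply H; intros u Yu Hs; apply H'; eauto.
- intros [u [Yu Hs]] H; exact (H u Yu Hs).
Qed.

Lemma sat_Bot v Y : ~ sat V v Y Bot.
Proof. simpl; tauto. Qed.

Lemma sat_Top v Y : sat V v Y Top.
Proof. simpl; tauto. Qed.

Lemma sat_BigAnd v Y s : sat V v Y (BigAnd s) <-> forall f, In f s -> sat V v Y f.
Proof.
elim: s => [|a s IH] /=.
- split; [by move=> _ f [] | move=> _; exact: sat_Top].
- rewrite IH. split; [move=> [Ha Hs] f [<-|Hf]; auto | move=> H; split; auto].
Qed.

Lemma sat_BigOr v Y s : sat V v Y (BigOr s) <-> exists f, In f s /\ sat V v Y f.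
Proof.
elim: s => [|a s IH].
- simpl; split; [tauto | by move=> [f [[] _]]].
- have -> : BigOr (a :: s) = Or a (BigOr s) by [].
  rewrite sat_Or IH. split.
  + move=> [Ha|[f [Hf Hs]]]; [exists a | exists f]; simpl; auto.
  + move=> [f [[<-|Hf] Hs]]; [left|right; exists f]; auto.
Qed.

Lemma In_map' (T : Type) (F : T -> form) s f :
  In f [seq F x | x <- s] <-> exists x, In x s /\ f = F x.
Proof.
elim: s => [|a s IH] /=; first by split; [| move=> [x [[] _]]].
rewrite IH. split.
- move=> [<-|[x [Hx ->]]]; eauto.
- move=> [x [[<-|Hx] ->]]; eauto.
Qed.

Lemma sat_BigAnd_map v Y (T : Type) (F : T -> form) s :
  sat V v Y (BigAnd [seq F x | x <- s]) <-> forall x, In x s -> sat V v Y (F x).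
Proof.
rewrite sat_BigAnd. split.
- move=> H x Hx; apply: H; apply/In_map'; eauto.
- move=> H f /In_map' [x [Hx ->]]; auto.
Qed.

Lemma sat_BigOr_map v Y (T : Type) (F : T -> form) s :
  sat V v Y (BigOr [seq F x | x <- s]) <-> exists x, In x s /\ sat V v Y (F x).
Proof.
rewrite sat_BigOr. split.
- move=> [f [/In_map' [x [Hx ->]] Hs]]; eauto.
- move=> [x [Hx Hs]]; exists (F x); split; auto; apply/In_map'; eauto.
Qed.

Lemma In_cat' (T : Type) (a b : seq T) x : In x (a ++ b) <-> In x a \/ In x b.
Proof. elim: a => [|c a IH] /=; [tauto| rewrite IH; tauto]. Qed.

Lemma In_flatten' (T : Type) (G : T -> seq form) s f :
  In f (flatten [seq G x | x <- s]) <-> exists x, In x s /\ In f (G x).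
Proof.
elim: s => [|a s IH] /=; first by split; [| move=> [x [[] _]]].
rewrite In_cat' IH. split.
- move=> [H|[x [Hx H]]]; eauto.
- move=> [x [[<-|Hx] H]]; eauto.
Qed.

Lemma nm_indep f : nonmodal f -> forall v Y Z, sat V v Y f <-> sat V v Z f.
Proof.
elim: f => [n|a IH|a IHa b IHb|a IH|a IHa b IHb] Hn v Y Z /=.
- tauto.
- by rewrite (IH Hn v Y Z).
- by case: Hn => Ha Hb; rewrite (IHa Ha v Y Z) (IHb Hb v Y Z).
- by case: Hn.
- by case: Hn.
Qed.

End Gen.
Arguments nm_indep {W V f} _ v Y Z.

Lemma In_mem (T : eqType) (x : T) s : In x s <-> x \in s.
Proof.
elim: s => [|a s IH] //=. rewrite in_cons IH. split.
- by move=> [->|->]; rewrite ?eqxx ?orbT.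
- by case/orP => [/eqP ->|]; auto.
Qed.

Lemma In_enum_set (T : finType) (K : {set T}) x : In x (enum K) <-> x \in K.
Proof. by rewrite In_mem mem_enum. Qed.

Lemma In_enumT (T : finType) (x : T) : In x (enum T).
Proof. by apply/In_mem; rewrite mem_enum. Qed.

Definition pb (P : Prop) : bool := if excluded_middle_informative P then true else false.
Lemma pbP P : pb P <-> P.
Proof. rewrite /pb; case: excluded_middle_informative => //=; split => //. Qed.

Section Main.
Variables (I J : finType)
  (phi psi : I -> form) (D : I -> seq form)
  (alpha beta : J -> form) (E : J -> seq form)
  (Hphi : forall i, nonmodal (phi i)) (Hpsi : forall i, nonmodal (psi i))
  (HD : forall i, Forall nonmodal (D i))
  (Halpha : forall j, nonmodal (alpha j)) (Hbeta : forall j, nonmodal (beta j))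
  (HE : forall j, Forall nonmodal (E j))
  (W : Type) (V : nat -> W -> Prop) (w : W) (X : W -> Prop).

Lemma nmD i c Y Z v : In c (D i) -> (sat V v Y c <-> sat V v Z c).
Proof. move=> Hc; apply: nm_indep; exact: (proj1 (Forall_forall _ _) (HD i) c Hc). Qed.
Lemma nmE j c Y Z v : In c (E j) -> (sat V v Y c <-> sat V v Z c).
Proof. move=> Hc; apply: nm_indep; exact: (proj1 (Forall_forall _ _) (HE j) c Hc). Qed.

Definition infoP (K : {set I}) v :=
  (exists k, k \in K /\ sat V v X (phi k)) /\ (forall k, k \in K -> sat V v X (psi k)).

Lemma sat_info K v Y : sat V v Y (info phi psi K) <-> infoP K v.
Proof.
rewrite /info /infoP /=. rewrite sat_BigOr_map sat_BigAnd_map. split.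
- move=> [[k [Hk Hp]] H2]; split.
  + exists k; split; first by apply/In_enum_set.
    exact: (proj1 (nm_indep (Hphi k) v Y X) Hp).
  + move=> k0 Hk0; apply: (proj1 (nm_indep (Hpsi k0) v Y X)); apply: H2; exact/In_enum_set.
- move=> [[k [Hk Hp]] H2]; split.
  + exists k; split; first by apply/In_enum_set.
    exact: (proj2 (nm_indep (Hphi k) v Y X) Hp).
  + move=> k0 /In_enum_set Hk0; apply: (proj2 (nm_indep (Hpsi k0) v Y X)); exact: H2.
Qed.

Definition goodP (K : {set I}) := forall k, k \in K -> forall c, In c (D k) ->
  exists u, X u /\ infoP K u /\ sat V u X c.

Lemma sat_good K : sat V w X (good phi psi D K) <-> goodP K.
Proof.
rewrite /good sat_BigAnd /goodP. split.
- move=> H k Hk c Hc.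
  have := H (Dia (And (info phi psi K) c)).
  rewrite sat_Dia => H'. case: H'.
  + apply/In_flatten'. exists k; split; first exact/In_enum_set.
    apply/In_map'; eauto.
  + move=> u [Xu [Hi Hc']]; exists u; split => //; split => //.
    by apply/(sat_info K u X).
- move=> H f /In_flatten' [k [/In_enum_set Hk /In_map' [c [Hc ->]]]].
  apply/sat_Dia. case: (H k Hk c Hc) => u [Xu [Hi Hc']].
  exists u; split => //; split => //; by apply/sat_info.
Qed.

Definition maxP (K : {set I}) := goodP K /\ forall L,
  (forall u, X u -> infoP K u -> infoP L u) ->
  (exists u, X u /\ ~ infoP K u /\ infoP L u) -> ~ goodP L.

Lemma sat_max K : sat V w X (maxK phi psi D K) <-> maxP K.
Proof.
rewrite /maxK /maxP sat_And sat_good sat_BigAnd_map. apply: and_iff_compat_l. split.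
- move=> H L H1 H2. move: (H L (@In_enumT _ L)); rewrite sat_Imp sat_Neg sat_good => H3.
  apply: H3. rewrite sat_And sat_Box sat_Dia. split.
  + move=> u Xu. rewrite sat_Imp !sat_info. exact: H1.
  + case: H2 => u [Xu [Hn Hl]]. exists u; split => //.
    rewrite sat_And sat_Neg !sat_info. by [].
- move=> H L _. rewrite sat_Imp sat_Neg sat_good sat_And sat_Box sat_Dia => [[H1 H2]].
  apply: H.
  + move=> u Xu. move: (H1 u Xu). by rewrite sat_Imp !sat_info.
  + move: H2 => [u [Xu]]. rewrite sat_And sat_Neg !sat_info => Hu. by exists u.
Qed.

Definition thetaP (Z : W -> Prop) v := exists i, sat V v X (phi i) /\
  (forall u, Z u -> sat V u X (psi i)) /\
  (forall c, In c (D i) -> exists u, Z u /\ sat V u X c).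

Lemma sat_Theta v Z : sat V v Z (Theta phi psi D) <-> thetaP Z v.
Proof.
rewrite /Theta sat_BigOr_map /thetaP. split.
- move=> [i [_ H]]. move: H; rewrite /theta !sat_And sat_Box sat_BigAnd_map.
  move=> [[H1 H2] H3]. exists i; split; first exact: (proj1 (nm_indep (Hphi i) v Z X)).
  split.
  + move=> u Zu; exact: (proj1 (nm_indep (Hpsi i) u Z X) (H2 u Zu)).
  + move=> c Hc. move: (H3 c Hc); rewrite sat_Dia => [[u [Zu Hu]]].
    exists u; split => //; exact: (proj1 (@nmD i c Z X u Hc) Hu).
- move=> [i [H1 [H2 H3]]]. exists i; split; first exact: In_enumT.
  rewrite /theta !sat_And sat_Box sat_BigAnd_map. split; first split.
  + exact: (proj2 (nm_indep (Hphi i) v Z X)).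
  + move=> u Zu; exact: (proj2 (nm_indep (Hpsi i) u Z X) (H2 u Zu)).
  + move=> c Hc. rewrite sat_Dia. case: (H3 c Hc) => u [Zu Hu].
    exists u; split => //; exact: (proj2 (@nmD i c Z X u Hc) Hu).
Qed.

Definition omegaP (Z : W -> Prop) v := exists j, sat V v X (alpha j) /\
  (forall u, Z u -> sat V u X (beta j)) /\
  (forall g, In g (E j) -> exists u, Z u /\ sat V u X g).

Lemma sat_Omega v Z : sat V v Z (Omega alpha beta E) <-> omegaP Z v.
Proof.
rewrite /Omega sat_BigOr_map /omegaP. split.
- move=> [i [_ H]]. move: H; rewrite /omega !sat_And sat_Box sat_BigAnd_map.
  move=> [[H1 H2] H3]. exists i; split; first exact: (proj1 (nm_indep (Halpha i) v Z X)).
  split.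
  + move=> u Zu; exact: (proj1 (nm_indep (Hbeta i) u Z X) (H2 u Zu)).
  + move=> c Hc. move: (H3 c Hc); rewrite sat_Dia => [[u [Zu Hu]]].
    exists u; split => //; exact: (proj1 (@nmE i c Z X u Hc) Hu).
- move=> [i [H1 [H2 H3]]]. exists i; split; first exact: In_enumT.
  rewrite /omega !sat_And sat_Box sat_BigAnd_map. split; first split.
  + exact: (proj2 (nm_indep (Halpha i) v Z X)).
  + move=> u Zu; exact: (proj2 (nm_indep (Hbeta i) u Z X) (H2 u Zu)).
  + move=> c Hc. rewrite sat_Dia. case: (H3 c Hc) => u [Zu Hu].
    exists u; split => //; exact: (proj2 (@nmE i c Z X u Hc) Hu).
Qed.

Definition consP (K : {set I}) := forall v, X v -> infoP K v -> forall Sj : {set J},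
  (forall s, s \in Sj -> sat V v X (alpha s)) ->
  (forall s, s \in ~: Sj -> ~ sat V v X (alpha s)) ->
  exists s, s \in Sj /\ (forall u, X u -> infoP K u -> sat V u X (beta s)) /\
    (forall g, In g (E s) -> exists u, X u /\ infoP K u /\ sat V u X g).

Lemma sat_star : sat V w X (lambda_star phi psi D alpha beta E) <->
  forall K, maxP K -> consP K.
Proof.
rewrite /lambda_star sat_BigAnd_map. split.
- move=> H K HK. move: (H K (@In_enumT _ K)). rewrite sat_Imp sat_max sat_Box => H1.
  move=> v Xv Hv Sj HS1 HS2. move: (H1 HK v Xv). rewrite sat_Imp sat_info sat_BigAnd_map.
  move=> H2. move: (H2 Hv Sj (@In_enumT _ Sj)).
  rewrite sat_Imp /state sat_And !sat_BigAnd_map sat_BigOr_map.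
  case.
  + split.
    * move=> s /In_enum_set; exact: HS1.
    * move=> s /In_enum_set Hs; rewrite sat_Neg; exact: HS2.
  + move=> s [/In_enum_set Hs]. rewrite sat_And sat_Box sat_BigAnd_map => [[H3 H4]].
    exists s; split => //; split.
    * move=> u Xu Hu. move: (H3 u Xu); rewrite sat_Imp sat_info => H5.
      exact: (proj1 (nm_indep (Hbeta s) u X X) (H5 Hu)).
    * move=> g Hg. move: (H4 g Hg); rewrite sat_Dia => [[u [Xu]]].
      rewrite sat_And sat_info => [[Hu Hgu]]. by exists u.
- move=> H K _. rewrite sat_Imp sat_max sat_Box => HK v Xv.
  rewrite sat_Imp sat_info sat_BigAnd_map => Hv Sj _.
  rewrite sat_Imp /state sat_And !sat_BigAnd_map sat_BigOr_map => [[HS1 HS2]].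
  case: (H K HK v Xv Hv Sj).
  + move=> s Hs; apply: HS1; exact/In_enum_set.
  + move=> s Hs; move: (HS2 s (proj2 (In_enum_set _ _) Hs)); by rewrite sat_Neg.
  + move=> s [Hs [H3 H4]]. exists s; split; first exact/In_enum_set.
    rewrite sat_And sat_Box sat_BigAnd_map; split.
    * move=> u Xu; rewrite sat_Imp sat_info; exact: H3.
    * move=> g Hg; rewrite sat_Dia. case: (H4 g Hg) => u [Xu [Hu Hgu]].
      exists u; split => //; rewrite sat_And sat_info; by [].
Qed.

Lemma Yk_theta K : goodP K -> forall v, X v /\ infoP K v ->
  thetaP (fun u => X u /\ infoP K u) v.
Proof.
move=> HK v [Xv [[k [Hk Hp]] Hs]]. exists k; split => //; split.
- move=> u [_ [_ Hu]]; exact: Hu.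
- move=> c Hc. case: (HK k Hk c Hc) => u [Xu [Hu Hcu]]. by exists u.
Qed.

Definition actP (Z : W -> Prop) i := (forall u, Z u -> sat V u X (psi i)) /\
  (forall c, In c (D i) -> exists u, Z u /\ sat V u X c).
Definition actS Z : {set I} := [set i | pb (actP Z i)].

Lemma act_good Z : (forall v, Z v -> X v) -> (forall v, Z v -> thetaP Z v) ->
  (forall v, Z v -> infoP (actS Z) v) /\ goodP (actS Z).
Proof.
move=> HZ HT.
have Hinf : forall v, Z v -> infoP (actS Z) v.
  move=> v Zv; split.
  - case: (HT v Zv) => i [H1 [H2 H3]]. exists i; split => //.
    rewrite inE; apply/pbP; by split.
  - move=> k; rewrite inE => /pbP [H1 _]; exact: H1.
split => // k; rewrite inE => /pbP [_ H2] c Hc.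
case: (H2 c Hc) => u [Zu Hu]. exists u; split; auto.
Qed.

Definition LamP := forall X' : W -> Prop, (forall v, X' v -> X v) ->
  (forall v, X' v -> thetaP X' v) ->
  ~ (exists X'' : W -> Prop, (forall v, X'' v -> X v) /\ (forall v, X'' v -> thetaP X'' v) /\
       (forall v, X' v -> X'' v) /\ (exists v, X'' v /\ ~ X' v)) ->
  forall v, X' v -> omegaP X' v.

Lemma sat_lambda : sat V w X (lambda phi psi D alpha beta E) <-> LamP.
Proof.
split.
- move=> H X' H1 H2 H3 v Hv. apply/sat_Omega. apply: (H X' H1) => //.
  + move=> u Hu; apply/sat_Theta; exact: H2.
  + move=> [X'' [A1 [A2 A3]]]; apply: H3; exists X''; split => //; split => //.
    move=> u Hu; apply/sat_Theta; exact: A2.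
- move=> H X' H1 H2 H3 v Hv. apply/sat_Omega. apply: (H X' H1) => //.
  + move=> u Hu; apply/sat_Theta; exact: H2.
  + move=> [X'' [A1 [A2 A3]]]; apply: H3; exists X''; split => //; split => //.
    move=> u Hu; apply/sat_Theta; exact: A2.
Qed.

Lemma main_iff : LamP <-> forall K, maxP K -> consP K.
Proof.
split.
- move=> H K [HG HM] v Xv Hv Sj HS1 HS2.
  set Y := fun u => X u /\ infoP K u.
  have HO : omegaP Y v.
    apply: (H Y) => //.
    + by move=> u [].
    + move=> u Hu; exact: Yk_theta.
    + move=> [Z [Z1 [Z2 [Z3 [u [Zu Hu]]]]]].
      case: (act_good Z1 Z2) => Hi Hg.
      apply: (HM (actS Z)) => //.
      * move=> x Xx Hx; apply: Hi; apply: Z3; by split.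
      * exists u; split; first exact: Z1.
        split; last exact: Hi.
        move=> Hk; apply: Hu; split => //; exact: Z1.
  case: HO => j [Hj1 [Hj2 Hj3]]. exists j; split.
  + apply/negPn/negP => Hn. apply: (HS2 j) => //. by rewrite inE.
  + split.
    * move=> u Xu Hu; apply: Hj2; by split.
    * move=> g Hg; case: (Hj3 g Hg) => u [[Xu Hu] Hgu]. by exists u.
- move=> H X' H1 H2 H3 v Hv.
  case: (act_good H1 H2) => Hi Hg.
  set K := actS X'.
  have HYX : forall u, X u -> infoP K u -> X' u.
    move=> u Xu Hu. apply: NNPP => Hn. apply: H3.
    exists (fun u => X u /\ infoP K u); split; first by move=> x [].
    split; first by move=> x Hx; exact: Yk_theta.
    split; first by move=> x Hx; split; auto.
    by exists u.
  have HK : maxP K.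
    split => // L HL [u [Xu [Hnu Hlu]]] HgL. apply: H3.
    exists (fun u => X u /\ infoP L u); split; first by move=> x [].
    split; first by move=> x Hx; exact: Yk_theta.
    split; first by move=> x Hx; split; auto.
    exists u; split => //. move=> Hu; apply: Hnu; exact: Hi.
  set Sj := [set s | pb (sat V v X (alpha s))].
  case: (H K HK v (H1 v Hv) (Hi v Hv) Sj).
  + by move=> s; rewrite inE => /pbP.
  + by move=> s; rewrite !inE => /negP Hn Hs; apply: Hn; apply/pbP.
  + move=> s [Hs [Hb Hgm]]. exists s; split.
    * by move: Hs; rewrite inE => /pbP.
    * split.
      - move=> u Hu; apply: Hb; auto.
      - move=> g Hgg; case: (Hgm g Hgg) => u [Xu [Hu Hgu]]. exists u; split => //.
        exact: HYX.
Qed.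

End Main.

Theorem proposition14 (I J : finType)
  (phi psi : I -> form) (D : I -> seq form)
  (alpha beta : J -> form) (E : J -> seq form)
  (Hphi : forall i, nonmodal (phi i)) (Hpsi : forall i, nonmodal (psi i))
  (HD : forall i, Forall nonmodal (D i))
  (Halpha : forall j, nonmodal (alpha j)) (Hbeta : forall j, nonmodal (beta j))
  (HE : forall j, Forall nonmodal (E j))
  (W : Type) (V : nat -> W -> Prop) (w : W) (X : W -> Prop) :
  sat V w X (lambda phi psi D alpha beta E) <->
  sat V w X (lambda_star phi psi D alpha beta E).
Proof.
rewrite sat_lambda // sat_star //. exact: main_iff.
Qed.
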